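(* Let $L=\langle S,A,\to\rangle$ be a labelled transition system. For all $x,y\in\{o,b\}$, the relation $\mathrel{\underline{\leftrightarrow}}^{ed}_{(x,y)}$ ($(x,y)$-generic bisimilarity with explicit divergence) coincides with the relation $\equiv^{ed}_{E(x,y)}$ (winning for Duplicator in the $E(x,y)$-generic bisimulation game with explicit divergence).
   Context: A labelled transition system (LTS) is $L=\langle S,A,\to\rangle$ with $S$ a set of states, $A$ a set of actions containing a special internal action $\tau$, and $\to\subseteq S\times A\times S$; write $s\xrightarrow{a}t$. Let $\twoheadrightarrow$ be the reflexive-transitive closure and $\twoheadrightarrow^+$ the transitive closure of $\xrightarrow{\tau}$. For $R\subseteq S\times S$ and $s,s',t\in S$: $s\twoheadrightarrow_{o,R,t}s'$ iff $s\twoheadrightarrow s'$; $s\twoheadrightarrow_{b,R,t}s'$ iff $s\twoheadrightarrow s'$, $t\,R\,s$ and $t\,R\,s'$. For $x,y\in\{o,b\}$, a symmetric $R\subseteq S\times S$ is an $(x,y)$-generic bisimulation if whenever $s\,R\,t$ and $s\xrightarrow{a}s'$, either $a=\tau$ and $s'\,R\,t$, or there are $t',t_1,t_2$ with $t\twoheadrightarrow_{x,R,s}t_1\xrightarrow{a}t_2\twoheadrightarrow_{y,R,s'}t'$ and $s'\,R\,t'$. A symmetric $R$ is an $(x,y)$-generic bisimulation with explicit divergence if it is an $(x,y)$-generic bisimulation and for all $s\,R\,t$, if there is an infinite sequence $s=s_0\xrightarrow{\tau}s_1\xrightarrow{\tau}s_2\cdots$, then there are a state $t'$ with $t\twoheadrightarrow^+t'$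 and some $k$ with $s_k\,R\,t'$. Write $s\mathrel{\underline{\leftrightarrow}}^{ed}_{(x,y)}t$ iff some such $R$ relates $s$ and $t$. Game with explicit divergence. Let $\frown,\smile$ be formal tags and $E\subseteq\{\frown,\smile\}$. The game is played by Spoiler and Duplicator on Spoiler-owned configurations $\langle (s,t),c,m,r\rangle_S$ and Duplicator-owned $\langle (s,t),c,m,r\rangle_D$, with $(s,t)\in S\times S$, $c\in (A\times S)\cup\{\dagger\}$, $m\in (S\times\{\frown,\smile\})\cup\{\dagger\}$, $r\in\{*,\checkmark\}$. From $\langle (s,t),c,m,r\rangle_S$ Spoiler may: (S1) move to $\langle (s,t),c,m,*\rangle_D$ if $c\neq\dagger$; (S2a) for some $s\xrightarrow{a}s'$, move to $\langle (s,t),(a,s'),(t,\frown),*\rangle_D$ if $c=\dagger$; (S2b) for some $s\xrightarrow{a}s'$, move to $\langle (s,t),(a,s'),(t,\frown),\checkmark\rangle_D$ if $c\neq (a,s')$; (S3) for some $t\xrightarrow{a}t'$, move to $\langle (t,s),(a,t'),(s,\frown),\checkmark\rangle_D$. From $\langle (u,v),(a,u'),(\bar v,f),r\rangle_D$ Duplicator may: (D1) move to $\langle (u',\bar v),\dagger,\dagger,*\rangle_S$ if $a=\tau$; (D2) if $f=\frown$ and $\bar v\xrightarrow{a}v'$: (a) move to $\langle (u',v'),(a,u'),(v',\smile),*\rangle_S$, or (b) move to $\langle (u',v'),\dagger,\dagger,\checkmark\rangle_S$, or (c) only if $\smile\in E$, move to $\langle (u,v),(a,u'),(v',\smile),*\rangle_S$;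 (D3) for some $\bar v\xrightarrow{\tau}v'$: (a) move to $\langle (u,v'),(a,u'),(v',f),*\rangle_S$, or (b) only if $f=\smile$, move to $\langle (u',v'),\dagger,\dagger,\checkmark\rangle_S$, or (c) only if $f\in E$, move to $\langle (u,v),(a,u'),(v',f),*\rangle_S$. Duplicator wins a finite play if Spoiler gets stuck, and an infinite play if it contains infinitely many $\checkmark$ rewards; all other plays are won by Spoiler. Write $s\equiv^{ed}_E t$ iff Duplicator has a strategy winning all plays from $\langle (s,t),\dagger,\dagger,*\rangle_S$. $E(x,y)$ is the smallest set with $\frown\in E(o,y)$ and $\smile\in E(x,o)$ for all $x,y\in\{o,b\}$. *)

(* Defs.v *)
From Stdlib Require Import List Relations Arith.
Import ListNotations.

Inductive Mode := o | b.
Inductive Tag := Frown | Smile.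
Inductive Owner := Spoiler | Duplicator.

Definition Exy (x y : Mode) (f : Tag) : Prop :=
  match f with Frown => x = o | Smile => y = o end.

Section LTS.
Variables (St A : Type) (tau : A) (step : St -> A -> St -> Prop).

Definition tstep (s s' : St) : Prop := step s tau s'.
Definition taus : St -> St -> Prop := clos_refl_trans_1n St tstep.
Definition taus_plus : St -> St -> Prop := clos_trans_1n St tstep.

Definition gtaus (x : Mode) (R : St -> St -> Prop) (t s s' : St) : Prop :=
  match x with
  | o => taus s s'
  | b => taus s s' /\ R t s /\ R t s'
  end.

Definition symmetric_rel (R : St -> St -> Prop) : Prop :=
  forall s t, R s t -> R t s.

Definition generic_bisim (x y : Mode) (R : St -> St -> Prop) : Prop :=
  symmetric_rel R /\
  forall s t a s', R s t -> step s a s' ->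
    (a = tau /\ R s' t) \/
    (exists t' t1 t2, gtaus x R s t t1 /\ step t1 a t2 /\
                      gtaus y R s' t2 t' /\ R s' t').

Definition generic_bisim_ed (x y : Mode) (R : St -> St -> Prop) : Prop :=
  generic_bisim x y R /\
  forall s t, R s t ->
    forall f : nat -> St, f 0 = s -> (forall n, step (f n) tau (f (Datatypes.S n))) ->
      exists t' k, taus_plus t t' /\ R (f k) t'.

Definition bisimilar_ed (x y : Mode) (s t : St) : Prop :=
  exists R, generic_bisim_ed x y R /\ R s t.

(* c = None encodes dagger, m = None encodes dagger; rw = false encodes *,
   rw = true encodes the checkmark reward. *)
Record conf := mkConf {
  own : Owner; pos : St * St; cc : option (A * St); mm : option (St * Tag); rw : bool }.

Inductive move (E : Tag -> Prop) : conf -> conf -> Prop :=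
| mvS1 : forall p c m r, c <> None ->
    move E (mkConf Spoiler p c m r) (mkConf Duplicator p c m false)
| mvS2a : forall s t m r a s', step s a s' ->
    move E (mkConf Spoiler (s,t) None m r)
           (mkConf Duplicator (s,t) (Some (a,s')) (Some (t,Frown)) false)
| mvS2b : forall s t c m r a s', step s a s' -> c <> Some (a,s') ->
    move E (mkConf Spoiler (s,t) c m r)
           (mkConf Duplicator (s,t) (Some (a,s')) (Some (t,Frown)) true)
| mvS3 : forall s t c m r a t', step t a t' ->
    move E (mkConf Spoiler (s,t) c m r)
           (mkConf Duplicator (t,s) (Some (a,t')) (Some (s,Frown)) true)
| mvD1 : forall u v u' vb f r,
    move E (mkConf Duplicator (u,v) (Some (tau,u')) (Some (vb,f)) r)
           (mkConf Spoiler (u',vb) None None false)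
| mvD2a : forall u v a u' vb r v', step vb a v' ->
    move E (mkConf Duplicator (u,v) (Some (a,u')) (Some (vb,Frown)) r)
           (mkConf Spoiler (u',v') (Some (a,u')) (Some (v',Smile)) false)
| mvD2b : forall u v a u' vb r v', step vb a v' ->
    move E (mkConf Duplicator (u,v) (Some (a,u')) (Some (vb,Frown)) r)
           (mkConf Spoiler (u',v') None None true)
| mvD2c : forall u v a u' vb r v', step vb a v' -> E Smile ->
    move E (mkConf Duplicator (u,v) (Some (a,u')) (Some (vb,Frown)) r)
           (mkConf Spoiler (u,v) (Some (a,u')) (Some (v',Smile)) false)
| mvD3a : forall u v a u' vb f r v', step vb tau v' ->
    move E (mkConf Duplicator (u,v) (Some (a,u')) (Some (vb,f)) r)
           (mkConf Spoiler (u,v') (Some (a,u')) (Some (v',f)) false)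
| mvD3b : forall u v a u' vb r v', step vb tau v' ->
    move E (mkConf Duplicator (u,v) (Some (a,u')) (Some (vb,Smile)) r)
           (mkConf Spoiler (u',v') None None true)
| mvD3c : forall u v a u' vb f r v', step vb tau v' -> E f ->
    move E (mkConf Duplicator (u,v) (Some (a,u')) (Some (vb,f)) r)
           (mkConf Spoiler (u,v) (Some (a,u')) (Some (v',f)) false).

(* A (history-dependent) Duplicator strategy maps the history of the play
   (oldest first, current configuration last) to the next configuration. *)
Definition strategy := list conf -> conf.

Definition valid_strategy (E : Tag -> Prop) (sigma : strategy) : Prop :=
  forall h c, own c = Duplicator -> (exists c', move E c c') ->
    move E c (sigma (h ++ [c])).

Definition hist (p : nat -> conf) (n : nat) : list conf := map p (seq 0 (Datatypes.S n)).

Definition winning_from (E : Tag -> Prop) (sigma : strategy) (c0 : conf) : Prop :=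
  (forall p : nat -> conf, p 0 = c0 ->
     (forall n, move E (p n) (p (Datatypes.S n))) ->
     (forall n, own (p n) = Duplicator -> p (Datatypes.S n) = sigma (hist p n)) ->
     forall N, exists n, N <= n /\ rw (p n) = true)
  /\
  (forall (p : nat -> conf) (k : nat), p 0 = c0 ->
     (forall n, n < k -> move E (p n) (p (Datatypes.S n))) ->
     (forall n, n < k -> own (p n) = Duplicator -> p (Datatypes.S n) = sigma (hist p n)) ->
     (forall c', ~ move E (p k) c') ->
     own (p k) = Spoiler).

Definition game_equiv_ed (E : Tag -> Prop) (s t : St) : Prop :=
  exists sigma, valid_strategy E sigma /\
    winning_from E sigma (mkConf Spoiler (s,t) None None false).

End LTS.

(* Main.v *)
Require Import Defs.
From Stdlib Require Import List Relations Arith Lia Classical ClassicalEpsilon.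
Import ListNotations.

Section Main.
Variables (St A : Type) (tau : A) (step : St -> A -> St -> Prop).

Local Notation taus := (taus St A tau step).
Local Notation tplus := (taus_plus St A tau step).
Local Notation gtaus := (gtaus St A tau step).

Lemma taus_refl s : taus s s.
Proof. constructor. Qed.

Lemma taus_step s s' s'' : step s tau s' -> taus s' s'' -> taus s s''.
Proof. intros; econstructor; eauto. Qed.

Lemma taus_trans a b c : taus a b -> taus b c -> taus a c.
Proof. induction 1; intros; auto. econstructor; eauto. apply IHclos_refl_trans_1n; auto. Qed.

Lemma taus_one a b : step a tau b -> taus a b.
Proof. intros; econstructor; eauto; constructor. Qed.

Lemma tplus_taus a b : tplus a b -> taus a b.
Proof. induction 1. apply taus_one; auto. econstructor; eauto. Qed.

Lemma taus_cases a b : taus a b -> a = b \/ tplus a b.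
Proof. induction 1; auto. right. destruct IHclos_refl_trans_1n.
  subst. constructor; auto. econstructor 2; eauto. Qed.

Lemma taus_tplus a b c : taus a b -> tplus b c -> tplus a c.
Proof. intros H; revert c; induction H; intros; auto. econstructor 2. exact H. apply IHclos_refl_trans_1n; auto. Qed.

Lemma tplus_taus_tplus a b c : tplus a b -> taus b c -> tplus a c.
Proof. intros H1 H2. revert a H1. induction H2; intros; auto.
  apply IHclos_refl_trans_1n. apply taus_tplus with x. apply tplus_taus; auto.
  constructor; auto. Qed.

Lemma tplus_last a b : tplus a b -> exists c, taus a c /\ step c tau b.
Proof. induction 1. exists x; split; auto; constructor.
  destruct IHclos_trans_1n as [c [H1 H2]]. exists c; split; auto. econstructor; eauto. Qed.

Lemma tplus_first a b : tplus a b -> exists c, step a tau c /\ taus c b.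
Proof. intros H; destruct H. exists y; split; auto; constructor.
  exists y; split; auto. apply tplus_taus; auto. Qed.

Fixpoint path (a : St) (n : nat) (b : St) : Prop :=
  match n with
  | 0 => a = b
  | S n => exists c, step a tau c /\ path c n b
  end.

Lemma taus_path a b : taus a b -> exists n, path a n b.
Proof. induction 1. exists 0; reflexivity. destruct IHclos_refl_trans_1n as [n Hn].
  exists (S n); simpl; eauto. Qed.

Lemma path_taus n : forall a b, path a n b -> taus a b.
Proof. induction n; simpl; intros. subst; constructor.
  destruct H as [c [H1 H2]]. econstructor. exact H1. eapply IHn; eauto. Qed.

Lemma gtaus_mono x (R R' : St -> St -> Prop) a b c :
  (forall p q, R p q -> R' p q) -> gtaus x R a b c -> gtaus x R' a b c.
Proof. destruct x; simpl; intuition. Qed.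

Lemma gtaus_taus x R a b c : gtaus x R a b c -> taus b c.
Proof. destruct x; simpl; intuition. Qed.

Definition SB (x y : Mode) (R : St -> St -> Prop) : Prop :=
  symmetric_rel St R /\
  (forall s t a s', R s t -> step s a s' ->
     (a = tau /\ exists t', taus t t' /\ R s t' /\ R s' t') \/
     (exists t1 t2 t', gtaus x R s t t1 /\ step t1 a t2 /\ gtaus y R s' t2 t' /\ R s' t')) /\
  (forall s t, R s t -> forall f : nat -> St, f 0 = s -> (forall n, step (f n) tau (f (S n))) ->
      exists t' k, tplus t t' /\ R (f k) t').

Lemma bisim_SB x y R : generic_bisim_ed St A tau step x y R -> SB x y R.
Proof.
  intros [[Hs Ht] Hd]. split; [|split]; auto.
  intros s t a s' H1 H2. destruct (Ht _ _ _ _ H1 H2) as [[Ha H]|[t' [t1 [t2 H]]]].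
  - left; split; auto. exists t; split; [constructor|]. split; auto.
  - right; exists t1, t2, t'; auto.
Qed.

Definition Sx x y s t := exists R, SB x y R /\ R s t.

Lemma Sx_SB x y : SB x y (Sx x y).
Proof.
  split; [|split].
  - intros s t [R [HR H]]. exists R; split; [exact HR| apply (proj1 HR); exact H].
  - intros s t a s' [R [HR H]] Hst. pose proof HR as [Hsy [Ht Hd]].
    assert (Hm : forall p q, R p q -> Sx x y p q).
    { intros p q Hpq. exists R; split; auto. }
    destruct (Ht _ _ _ _ H Hst) as [[Ha [t' [H1 [H2 H3]]]]|[t1 [t2 [t' [H1 [H2 [H3 H4]]]]]]].
    + left; split; auto. exists t'; auto.
    + right. exists t1, t2, t'. repeat split; eauto using gtaus_mono.
  - intros s t [R [HR H]] f Hf0 Hf. pose proof HR as [Hsy [Ht Hd]].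
    destruct (Hd _ _ H f Hf0 Hf) as [t' [k [H1 H2]]]. exists t', k; split; auto.
    exists R; split; auto.
Qed.

Lemma SB_walk x y R : SB x y R -> forall s s', taus s s' -> forall t, R s t ->
  exists t', taus t t' /\ R s' t'.
Proof.
  intros [Hsy [Ht Hd]] s s' H. induction H; intros t Hst.
  - exists t; split; auto; constructor.
  - destruct (Ht _ _ _ _ Hst H) as [[_ [t' [H1 [H2 H3]]]]|[t1 [t2 [t' [H1 [H2 [H3 H4]]]]]]].
    + destruct (IHclos_refl_trans_1n _ H3) as [t'' [H4 H5]]. exists t''; split; auto.
      eapply taus_trans; eauto.
    + destruct (IHclos_refl_trans_1n _ H4) as [t'' [H5 H6]]. exists t''; split; auto.
      eapply taus_trans. apply (gtaus_taus _ _ _ _ _ H1). econstructor. apply H2.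
      eapply taus_trans. apply (gtaus_taus _ _ _ _ _ H3). auto.
Qed.

Definition StC (R : St -> St -> Prop) u w := exists t0 tn, R u t0 /\ R u tn /\ taus t0 w /\ taus w tn.
Definition Rst (R : St -> St -> Prop) p q := R p q \/ StC R p q \/ StC R q p.

Lemma Rst_SB x y R : SB x y R -> SB x y (Rst R).
Proof.
  intros HR. pose proof HR as [Hsy [Ht Hd]].
  assert (Hm : forall p q, R p q -> Rst R p q) by (intros; left; auto).
  split; [|split].
  - intros p q [H|[H|H]]; unfold Rst; auto.
  - intros p q a p' H Hst. destruct H as [H|[H|H]].
    + destruct (Ht _ _ _ _ H Hst) as [[Ha [t' [H1 [H2 H3]]]]|[t1 [t2 [t' [H1 [H2 [H3 H4]]]]]]].
      * left; split; auto. exists t'; auto.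
      * right. exists t1, t2, t'. repeat split; eauto using gtaus_mono.
    + destruct H as [t0 [tn [H1 [H2 [H3 H4]]]]].
      destruct (Ht _ _ _ _ H2 Hst) as [[Ha [t' [G1 [G2 G3]]]]|[t1 [t2 [t' [G1 [G2 [G3 G4]]]]]]].
      * left; split; auto. exists t'; repeat split; auto. eapply taus_trans; eauto.
      * right. exists t1, t2, t'. repeat split; eauto using gtaus_mono.
        destruct x; simpl in *.
        -- eapply taus_trans; eauto.
        -- destruct G1 as [G1 [G5 G6]]. repeat split; auto. eapply taus_trans; eauto.
           right; left; exists t0, tn; auto.
    + destruct H as [t0 [tn [H1 [H2 [H3 H4]]]]].
      destruct (SB_walk _ _ _ HR _ _ H3 q (Hsy _ _ H1)) as [r [Hr1 Hr2]].
      destruct (Ht _ _ _ _ Hr2 Hst) as [[Ha [t' [G1 [G2 G3]]]]|[t1 [t2 [t' [G1 [G2 [G3 G4]]]]]]].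
      * left; split; auto. exists t'; repeat split; auto. eapply taus_trans; eauto.
      * right. exists t1, t2, t'. repeat split; eauto using gtaus_mono.
        destruct x; simpl in *.
        -- eapply taus_trans; eauto.
        -- destruct G1 as [G1 [G5 G6]]. repeat split; auto. eapply taus_trans; eauto.
           right; right; exists t0, tn; auto.
  - intros p q H f Hf0 Hf. destruct H as [H|[H|H]].
    + destruct (Hd _ _ H f Hf0 Hf) as [t' [k [H1 H2]]]; eauto.
    + destruct H as [t0 [tn [H1 [H2 [H3 H4]]]]].
      destruct (Hd _ _ H2 f Hf0 Hf) as [t' [k [G1 G2]]]. exists t', k; split; auto.
      eapply taus_tplus; eauto.
    + destruct H as [t0 [tn [H1 [H2 [H3 H4]]]]].
      destruct (SB_walk _ _ _ HR _ _ H3 q (Hsy _ _ H1)) as [r [Hr1 Hr2]].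
      destruct (taus_cases _ _ Hr1) as [E|E].
      * subst r. destruct (Hd _ _ Hr2 f Hf0 Hf) as [t' [k [G1 G2]]]; eauto.
      * exists r, 0. rewrite Hf0. split; auto.
Qed.

Lemma Sx_stutter x y u t0 w tn : Sx x y u t0 -> Sx x y u tn -> taus t0 w -> taus w tn ->
  Sx x y u w.
Proof.
  intros H1 H2 H3 H4. exists (Rst (Sx x y)). split. apply Rst_SB, Sx_SB.
  right; left. exists t0, tn; auto.
Qed.


Local Notation conf := (conf St A).
Local Notation mkC := (mkConf St A).

Lemma min_exists (P : nat -> Prop) : (exists n, P n) -> exists n, P n /\ forall m, P m -> n <= m.
Proof.
  intros [n Hn]. induction n as [n IH] using (well_founded_induction lt_wf).
  destruct (classic (exists m, m < n /\ P m)) as [[m [H1 H2]]|H].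
  - apply (IH m H1 H2).
  - exists n; split; auto. intros m Hm. destruct (Nat.lt_ge_cases m n); auto.
    exfalso; apply H; eauto.
Qed.

Lemma tplus_path a b : tplus a b -> exists k, path a (S k) b.
Proof. intros H. destruct (tplus_first _ _ H) as [c [H1 H2]].
  destruct (taus_path _ _ H2) as [k Hk]. exists k; simpl; eauto. Qed.

Section Fwd.
Variables (x y : Mode).
Local Notation B := (Sx x y).
Local Notation E := (Exy x y).
Local Notation mv := (move St A tau step E).

Definition Post u' t2 := exists t', taus t2 t' /\ B u' t' /\ (y = b -> B u' t2).
Definition RA (u : St) (a : A) (u' vb : St) (n : nat) : Prop :=
  exists t1 t2, path vb n t1 /\ step t1 a t2 /\ (x = b -> B u t1) /\ Post u' t2.
Definition PL u' vb n := exists t', path vb (S n) t' /\ B u' t'.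

Definition Resp (d d' : conf) : Prop :=
  match d with
  | mkConf _ _ Duplicator (u,v) (Some (a,u')) (Some (vb, Frown)) r =>
    (exists n, RA u a u' vb n /\ (forall m, RA u a u' vb m -> n <= m) /\
     ( (n = 0 /\ exists t2, step vb a t2 /\ B u' t2 /\ d' = mkC Spoiler (u',t2) None None true)
     \/ (n = 0 /\ y = o /\ exists t2, step vb a t2 /\ (exists k, PL u' t2 k) /\
            d' = mkC Spoiler (u,v) (Some (a,u')) (Some (t2,Smile)) false)
     \/ (exists m v', n = S m /\ step vb tau v' /\ RA u a u' v' m /\
           ((x = b /\ d' = mkC Spoiler (u,v') (Some(a,u')) (Some (v',Frown)) false) \/
            (x = o /\ d' = mkC Spoiler (u,v) (Some(a,u')) (Some(v',Frown)) false)))))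
    \/ ((~ exists n, RA u a u' vb n) /\ a = tau /\ d' = mkC Spoiler (u',vb) None None false)
  | mkConf _ _ Duplicator (u,v) (Some (a,u')) (Some (vb, Smile)) r =>
    exists n, PL u' vb n /\ (forall m, PL u' vb m -> n <= m) /\
     ((n = 0 /\ exists t', step vb tau t' /\ B u' t' /\ d' = mkC Spoiler (u',t') None None true)
      \/ (exists m v', n = S m /\ y = o /\ step vb tau v' /\ PL u' v' m /\
            d' = mkC Spoiler (u,v) (Some (a,u')) (Some (v',Smile)) false))
  | _ => False
  end.

Lemma Resp_move d d' : Resp d d' -> mv d d'.
Proof.
  destruct d as [[|] [u v] [[a u']|] [[vb [|]]|] r]; simpl; try tauto.
  - intros [[n [H1 [H2 H]]]|[H1 [H2 H3]]].
    + destruct H as [[_ [t2 [G1 [_ ->]]]]|[[_ [Hy [t2 [G1 [_ ->]]]]]|[m [v' [_ [G1 [_ [[_ ->]|[Hx ->]]]]]]]]].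
      * apply mvD2b; auto.
      * apply mvD2c; auto.
      * apply mvD3a; auto.
      * apply mvD3c; simpl; auto.
    + subst. apply mvD1.
  - intros [n [H1 [H2 [[_ [t' [G1 [_ ->]]]]|[m [v' [_ [Hy [G1 [_ ->]]]]]]]]]].
    + apply mvD3b; auto.
    + apply mvD3c; simpl; auto.
Qed.

Definition DInv (d : conf) : Prop :=
  match d with
  | mkConf _ _ Duplicator (u,v) (Some (a,u')) (Some (vb, f)) r =>
    B u v /\
    (f = Frown -> (x = b -> B u vb) /\ ((exists n, RA u a u' vb n) \/ (a = tau /\ B u' vb))) /\
    (f = Smile -> y = o /\ exists n, PL u' vb n)
  | _ => False
  end.

Definition Inv (c : conf) : Prop :=
  match c with
  | mkConf _ _ Spoiler (u,v) cc mm r =>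
     B u v /\ match cc with None => True | Some _ => DInv (mkC Duplicator (u,v) cc mm false) end
  | mkConf _ _ Duplicator _ _ _ _ => DInv c
  end.

Lemma B_sym u v : B u v -> B v u.
Proof. apply (proj1 (Sx_SB x y)). Qed.

Lemma fresh s t a s' : B s t -> step s a s' -> (exists n, RA s a s' t n) \/ (a = tau /\ B s' t).
Proof.
  intros H1 H2. destruct (proj1 (proj2 (Sx_SB x y)) _ _ _ _ H1 H2) as
    [[Ha [t' [G1 [G2 G3]]]]|[t1 [t2 [t' [G1 [G2 [G3 G4]]]]]]].
  - destruct (taus_cases _ _ G1) as [->|G].
    + right; auto.
    + left. destruct (tplus_last _ _ G) as [c [K1 K2]]. destruct (taus_path _ _ K1) as [n Hn].
      exists n, c, t'. subst a. repeat split; auto.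
      * intros _. apply Sx_stutter with t t'; auto. apply taus_one; auto.
      * exists t'; repeat split; auto. constructor.
  - left. destruct (taus_path _ _ (gtaus_taus _ _ _ _ _ G1)) as [n Hn].
    exists n, t1, t2. repeat split; auto.
    + intros ->. destruct G1 as [_ [_ G]]; auto.
    + exists t'; repeat split; auto. eapply gtaus_taus; eauto.
      intros ->. destruct G3 as [_ [G _]]; auto.
Qed.

Lemma Resp_exists d : DInv d -> exists d', Resp d d'.
Proof.
  destruct d as [[|] [u v] [[a u']|] [[vb [|]]|] r]; simpl; try tauto.
  - intros [H0 [H1 _]]. destruct (H1 eq_refl) as [Hxb HH].
    destruct (classic (exists n, RA u a u' vb n)) as [HRA|HRA].
    + clear HH. destruct (min_exists _ HRA) as [n [Hn Hmin]].
      destruct n as [|m].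
      * pose proof Hn as Hn'.
        destruct Hn' as [t1 [t2 [P1 [P2 [P3 [t' [Q1 [Q2 Q3]]]]]]]]. simpl in P1; subst t1.
        assert (HC : B u' t2 \/ (y = o /\ tplus t2 t')).
        { destruct y. - destruct (taus_cases _ _ Q1) as [Eq|Q]. + left; rewrite Eq; auto.
            + right; auto. - left; auto. }
        destruct HC as [HC|[Hy Q]].
        -- exists (mkC Spoiler (u',t2) None None true). left. exists 0.
           split; [exact Hn|]. split; [exact Hmin|]. left. split; [reflexivity|].
           exists t2. auto.
        -- exists (mkC Spoiler (u,v) (Some (a,u')) (Some (t2,Smile)) false). left. exists 0.
           split; [exact Hn|]. split; [exact Hmin|]. right; left. split; [reflexivity|].
           split; [exact Hy|]. exists t2. split; [exact P2|]. split; [|reflexivity].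
           destruct (tplus_path _ _ Q) as [k Hk]. exists k, t'; auto.
      * pose proof Hn as Hn'.
        destruct Hn' as [t1 [t2 [[v' [P0 P1]] [P2 [P3 P4]]]]].
        assert (HR : RA u a u' v' m) by (exists t1, t2; auto).
        assert (Hx : x = b \/ x = o) by (destruct x; auto).
        destruct Hx as [Hx|Hx].
        -- exists (mkC Spoiler (u,v') (Some(a,u')) (Some (v',Frown)) false). left. exists (S m).
           split; [exact Hn|]. split; [exact Hmin|]. right; right. exists m, v'.
           split; [reflexivity|]. split; [exact P0|]. split; [exact HR|]. left; auto.
        -- exists (mkC Spoiler (u,v) (Some(a,u')) (Some (v',Frown)) false). left. exists (S m).
           split; [exact Hn|]. split; [exact Hmin|]. right; right. exists m, v'.
           split; [reflexivity|]. split; [exact P0|]. split; [exact HR|]. right; auto.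
    + destruct HH as [HH|[Ha HB]]; [contradiction|].
      exists (mkC Spoiler (u',vb) None None false). right. auto.
  - intros [H0 [_ H1]]. destruct (H1 eq_refl) as [Hy HPL].
    destruct (min_exists _ HPL) as [n [Hn Hmin]].
    destruct n as [|m].
    + pose proof Hn as Hn'. destruct Hn' as [t' [[c [P1 P2]] P3]]. simpl in P2; subst c.
      exists (mkC Spoiler (u',t') None None true). exists 0.
      split; [exact Hn|]. split; [exact Hmin|]. left. split; [reflexivity|]. exists t'; auto.
    + pose proof Hn as Hn'. destruct Hn' as [t' [[c [P1 P2]] P3]].
      exists (mkC Spoiler (u,v) (Some (a,u')) (Some (c,Smile)) false). exists (S m).
      split; [exact Hn|]. split; [exact Hmin|]. right. exists m, c.
      repeat split; auto. exists t'; auto.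
Qed.

End Fwd.

Section Fwd2.
Variables (x y : Mode).
Local Notation B := (Sx x y).
Local Notation E := (Exy x y).
Local Notation mv := (move St A tau step E).
Local Notation RA := (RA x y).
Local Notation PL := (PL x y).
Local Notation Resp := (Resp x y).
Local Notation DInv := (DInv x y).
Local Notation Inv := (Inv x y).

Lemma Inv_next c c' : Inv c -> mv c c' -> (own St A c = Duplicator -> Resp c c') -> Inv c'.
Proof.
  intros HI Hm HR. destruct c as [[|] [u v] cc mm r].
  - simpl in HI. destruct HI as [H0 H1]. clear HR.
    remember (mkC Spoiler (u,v) cc mm r) as c. destruct Hm; try discriminate; injection Heqc; intros; subst.
    + match goal with |- context [mkConf _ _ Duplicator _ ?cc _ _] => destruct cc; [exact H1|congruence] end.
    + simpl. split; auto. split; [intros _; split; [auto|eapply fresh; eauto]|discriminate].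
    + simpl. split; auto. split; [intros _; split; [auto|eapply fresh; eauto]|discriminate].
    + simpl. assert (HB' := B_sym x y _ _ H0).
      split; auto. split; [intros _; split; [auto|eapply fresh; eauto]|discriminate].
  - specialize (HR eq_refl). clear Hm.
    destruct cc as [[a u']|]; [|simpl in HI; tauto].
    destruct mm as [[vb [|]]|]; [| |simpl in HI; tauto].
    + simpl in HI. destruct HI as [H0 [H1 _]]. destruct (H1 eq_refl) as [Hxb HH]. clear H1.
      simpl in HR. destruct HR as [[n [Hn [Hmin HR]]]|[HnRA [Ha ->]]].
      * destruct HR as [[_ [t2 [G1 [G2 ->]]]]|[[_ [Hy [t2 [G1 [G2 ->]]]]]|
                         [m [v' [_ [G1 [G2 [[Hx ->]|[Hx ->]]]]]]]]].
        -- simpl; auto.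
        -- simpl. repeat split; auto; discriminate.
        -- assert (Hb : B u v').
           { destruct G2 as [t1 [t2 [P1 [_ [P3 _]]]]].
             apply Sx_stutter with vb t1; auto. apply taus_one; auto. eapply path_taus; eauto. }
           simpl. split; auto. split; auto. split; [intros _; split; [intros _; auto| left; exists m; auto]|discriminate].
        -- simpl. split; auto. split; auto. split; [intros _; split; [intros Hb; rewrite Hb in Hx; discriminate| left; exists m; auto]|discriminate].
      * simpl. split; auto. destruct HH as [HH|[_ HH]]; [contradiction|auto].
    + simpl in HI. destruct HI as [H0 [_ H1]]. destruct (H1 eq_refl) as [Hy _]. clear H1.
      simpl in HR. destruct HR as [n [Hn [Hmin [[_ [t' [G1 [G2 ->]]]]|[m [v' [_ [_ [G1 [G2 ->]]]]]]]]]].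
      * simpl; auto.
      * simpl. repeat split; auto; try discriminate. exists m; auto.
Qed.

Variable c0 : conf.

Definition sigma (h : list conf) : conf :=
  let d := last h c0 in
  epsilon (inhabits d) (fun d' => Resp d d' \/ ((~ exists e, Resp d e) /\ mv d d')).

Lemma sigma_valid : valid_strategy St A tau step E sigma.
Proof.
  intros h c Hown [c' Hc']. unfold sigma. rewrite last_last.
  match goal with |- mv c (epsilon ?i ?P) => assert (HP : P (epsilon i P)) end.
  { apply epsilon_spec. destruct (classic (exists e, Resp c e)) as [[e He]|He].
    - exists e; left; auto.
    - exists c'; right; auto. }
  destruct HP as [HP|[_ HP]]; auto. apply Resp_move; auto.
Qed.

Lemma sigma_resp h c : DInv c -> Resp c (sigma (h ++ [c])).
Proof.
  intros HD. unfold sigma. rewrite last_last.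
  match goal with |- Resp c (epsilon ?i ?P) => assert (HP : P (epsilon i P)) end.
  { apply epsilon_spec. destruct (Resp_exists _ _ _ HD) as [e He]. exists e; left; auto. }
  destruct HP as [HP|[HP _]]; auto. exfalso; apply HP. apply Resp_exists; auto.
Qed.

Lemma hist_last (p : nat -> conf) n : exists h, hist St A p n = h ++ [p n].
Proof. unfold hist. rewrite seq_S, map_app. simpl. eexists; reflexivity. Qed.

Section Play.
Variable p : nat -> conf.
Hypothesis Hmv : forall n, mv (p n) (p (S n)).
Hypothesis Hcons : forall n, own St A (p n) = Duplicator -> p (S n) = sigma (hist St A p n).
Hypothesis Hinv : forall n, Inv (p n).

Lemma resp_at n : own St A (p n) = Duplicator -> Resp (p n) (p (S n)).
Proof.
  intros H. rewrite (Hcons n H). destruct (hist_last p n) as [h ->]. apply sigma_resp.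
  pose proof (Hinv n) as HI. destruct (p n) as [[|] ? ? ? ?]; simpl in *; auto; discriminate.
Qed.

Lemma spoiler_nr n : own St A (p n) = Spoiler -> rw St A (p (S n)) = false ->
  (exists u v m r, p n = mkC Spoiler (u,v) None m r /\ exists a s', step u a s' /\
      p (S n) = mkC Duplicator (u,v) (Some (a,s')) (Some (v,Frown)) false)
  \/ (exists pp cc mm r, cc <> None /\ p n = mkC Spoiler pp cc mm r /\ p (S n) = mkC Duplicator pp cc mm false).
Proof.
  intros Ho Hr. pose proof (Hmv n) as H.
  remember (p n) as c. remember (p (S n)) as c'. destruct H; subst; simpl in *; try discriminate.
  - right. do 4 eexists; eauto.
  - left. do 4 eexists; split; eauto.
Qed.

Variable N : nat.
Hypothesis HN : forall m, N <= m -> rw St A (p m) = false.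

Lemma smile_phase : forall k n u v a u' vb r, N <= n ->
  p n = mkC Duplicator (u,v) (Some (a,u')) (Some (vb,Smile)) r -> PL u' vb k -> False.
Proof.
  intro k. induction k as [k IH] using (well_founded_induction lt_wf).
  intros n u v a u' vb r Hn Hp HPL.
  pose proof (resp_at n) as HR. rewrite Hp in HR. specialize (HR eq_refl). simpl in HR.
  destruct HR as [n0 [Hn0 [Hmin [[_ [t' [G1 [G2 HE]]]]|[m [v' [-> [_ [G1 [G2 HE]]]]]]]]]].
  - pose proof (HN (S n)) as H. rewrite HE in H. simpl in H. discriminate H; lia.
  - destruct (spoiler_nr (S n)) as [[u0 [v0 [m0 [r0 [H1 _]]]]]|[pp [cc [mm [r0 [H1 [H2 H3]]]]]]].
    + rewrite HE; reflexivity.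
    + apply HN; lia.
    + rewrite HE in H1; discriminate.
    + rewrite HE in H2. injection H2; intros; subst.
      apply (IH m (Nat.lt_le_trans _ _ _ (Nat.lt_succ_diag_r m) (Hmin k HPL)) (S (S n)) u v a u' v' false);
        [lia|exact H3|exact G2].
Qed.

Lemma frown_phase : forall k n u v a u' vb r, N <= n ->
  p n = mkC Duplicator (u,v) (Some (a,u')) (Some (vb,Frown)) r -> RA u a u' vb k -> False.
Proof.
  intro k. induction k as [k IH] using (well_founded_induction lt_wf).
  intros n u v a u' vb r Hn Hp HRA.
  pose proof (resp_at n) as HR. rewrite Hp in HR. specialize (HR eq_refl). simpl in HR.
  destruct HR as [[n0 [Hn0 [Hmin HR]]]|[HnRA _]]; [|apply HnRA; eauto].
  specialize (Hmin k HRA).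
  destruct HR as [[_ [t2 [G1 [G2 HE]]]]|[[_ [Hy [t2 [G1 [[kk G2] HE]]]]]|
                     [m [v' [-> [G1 [G2 [[Hx HE]|[Hx HE]]]]]]]]].
  - pose proof (HN (S n)) as H. rewrite HE in H. simpl in H. discriminate H; lia.
  - destruct (spoiler_nr (S n)) as [[u0 [v0 [m0 [r0 [H1 _]]]]]|[pp [cc [mm [r0 [H1 [H2 H3]]]]]]].
    + rewrite HE; reflexivity.
    + apply HN; lia.
    + rewrite HE in H1; discriminate.
    + rewrite HE in H2. injection H2; intros; subst.
      apply (smile_phase kk (S (S n)) u v a u' t2 false); [lia|exact H3|exact G2].
  - destruct (spoiler_nr (S n)) as [[u0 [v0 [m0 [r0 [H1 _]]]]]|[pp [cc [mm [r0 [H1 [H2 H3]]]]]]].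
    + rewrite HE; reflexivity.
    + apply HN; lia.
    + rewrite HE in H1; discriminate.
    + rewrite HE in H2. injection H2; intros; subst.
      apply (IH m ltac:(lia) (S (S n)) u v' a u' v' false); [lia|exact H3|exact G2].
  - destruct (spoiler_nr (S n)) as [[u0 [v0 [m0 [r0 [H1 _]]]]]|[pp [cc [mm [r0 [H1 [H2 H3]]]]]]].
    + rewrite HE; reflexivity.
    + apply HN; lia.
    + rewrite HE in H1; discriminate.
    + rewrite HE in H2. injection H2; intros; subst.
      apply (IH m ltac:(lia) (S (S n)) u v a u' v' false); [lia|exact H3|exact G2].
Qed.

Lemma dconf_d1 n : N <= n -> own St A (p n) = Duplicator ->
  exists u v u' vb r, p n = mkC Duplicator (u,v) (Some (tau,u')) (Some (vb,Frown)) r /\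
    (forall k, ~ RA u tau u' vb k) /\ p (S n) = mkC Spoiler (u',vb) None None false.
Proof.
  intros Hn Ho. pose proof (Hinv n) as HI.
  destruct (p n) as [[|] [u v] [[a u']|] [[vb [|]]|] r] eqn:Hp; simpl in Ho; try discriminate;
    simpl in HI; try tauto.
  - pose proof (resp_at n) as HR. rewrite Hp in HR. specialize (HR eq_refl). simpl in HR.
    destruct HR as [[n0 [Hn0 _]]|[HnRA [Ha HE]]].
    + exfalso; eapply frown_phase; eauto.
    + subst a. exists u, v, u', vb, r. repeat split; auto. intros k Hk; apply HnRA; eauto.
  - destruct HI as [_ [_ H]]. destruct (H eq_refl) as [_ [k Hk]].
    exfalso; eapply smile_phase; eauto.
Qed.

Lemma round n u v m r : N <= n -> p n = mkC Spoiler (u,v) None m r ->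
  exists u', step u tau u' /\ (forall k, ~ RA u tau u' v k) /\
     p (S (S n)) = mkC Spoiler (u',v) None None false.
Proof.
  intros Hn Hp.
  destruct (spoiler_nr n) as [[u0 [v0 [m0 [r0 [H1 [a [s' [H2 H3]]]]]]]]|[pp [cc [mm [r0 [H1 [H2 H3]]]]]]].
  - rewrite Hp; reflexivity.
  - apply HN; lia.
  - rewrite Hp in H1; injection H1; intros; subst.
    destruct (dconf_d1 (S n)) as [u1 [v1 [u1' [vb [r1 [G1 [G2 G3]]]]]]]; [lia|rewrite H3; reflexivity|].
    rewrite H3 in G1. injection G1; intros; subst. exists u1'. auto.
  - rewrite Hp in H2; injection H2; intros; subst; congruence.
Qed.

Lemma first_clean : exists M u v m r, N <= M /\ p M = mkC Spoiler (u,v) None m r.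
Proof.
  destruct (p N) as [[|] [u v] cc mm r] eqn:Hp.
  - destruct cc as [c|].
    + destruct (spoiler_nr N) as [[u0 [v0 [m0 [r0 [H1 _]]]]]|[pp [cc [mm' [r0 [H1 [H2 H3]]]]]]].
      * rewrite Hp; reflexivity.
      * apply HN; lia.
      * rewrite Hp in H1; discriminate.
      * destruct (dconf_d1 (S N)) as [u1 [v1 [u1' [vb [r1 [G1 [G2 G3]]]]]]]; [lia|rewrite H3; reflexivity|].
        exists (S (S N)), u1', vb, None, false. split; auto.
    + exists N, u, v, mm, r; auto.
  - destruct (dconf_d1 N) as [u1 [v1 [u1' [vb [r1 [G1 [G2 G3]]]]]]]; [lia|rewrite Hp; reflexivity|].
    exists (S N), u1', vb, None, false. split; auto.
Qed.

Lemma no_infinite_silence : False.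
Proof.
  destruct first_clean as [M [u0 [v0 [m0 [r0 [HM Hp]]]]]].
  assert (Hj : forall j, exists u m r, p (M + 2 * j) = mkC Spoiler (u,v0) None m r).
  { induction j as [|j IH].
    - exists u0, m0, r0. rewrite Nat.add_0_r; auto.
    - destruct IH as [u [m [r Hu]]]. destruct (round (M + 2*j) u v0 m r) as [u' [_ [_ H]]]; [lia|auto|].
      exists u', None, false. replace (M + 2 * S j) with (S (S (M + 2 * j))) by lia. auto. }
  set (f := fun j => fst (pos St A (p (M + 2 * j)))).
  assert (Hf : forall j, step (f j) tau (f (S j)) /\ (forall k, ~ RA (f j) tau (f (S j)) v0 k)
                         /\ B (f j) v0).
  { intro j. destruct (Hj j) as [u [m [r Hu]]].
    destruct (round (M + 2*j) u v0 m r) as [u' [G1 [G2 G3]]]; [lia|auto|].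
    unfold f. replace (M + 2 * S j) with (S (S (M + 2 * j))) by lia. rewrite Hu, G3. simpl.
    repeat split; auto. pose proof (Hinv (M + 2 * j)) as HI. rewrite Hu in HI. apply HI. }
  destruct (proj2 (proj2 (Sx_SB x y)) (f 1) v0 (proj2 (proj2 (Hf 1))) (fun n => f (S n)) eq_refl
              (fun n => proj1 (Hf (S n)))) as [t' [k [H1 H2]]].
  destruct (tplus_first _ _ H1) as [c [K1 K2]].
  apply (proj1 (proj2 (Hf k)) 0). exists v0, c. repeat split; auto.
  - intros _; apply (Hf k).
  - exists t'. repeat split; auto. intros _. apply Sx_stutter with v0 t'; auto.
    apply (Hf (S k)). apply taus_one; auto.
Qed.

End Play.

Lemma play_inv (p : nat -> conf) k :
  Inv (p 0) -> (forall n, n < k -> mv (p n) (p (S n))) ->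
  (forall n, n < k -> own St A (p n) = Duplicator -> p (S n) = sigma (hist St A p n)) ->
  forall n, n <= k -> Inv (p n).
Proof.
  intros H0 Hm Hc n. induction n; intros Hn; auto.
  specialize (IHn ltac:(lia)).
  apply Inv_next with (p n); [exact IHn|apply Hm; lia|]. intros Ho. rewrite (Hc n ltac:(lia) Ho).
  destruct (hist_last p n) as [h ->]. apply sigma_resp.
  destruct (p n) as [[|] ? ? ? ?]; simpl in *; auto; discriminate.
Qed.

End Fwd2.

Lemma forward x y s t : bisimilar_ed St A tau step x y s t -> game_equiv_ed St A tau step (Exy x y) s t.
Proof.
  intros [R [HR Hst]].
  assert (HB : Sx x y s t) by (exists R; split; auto; apply bisim_SB; auto).
  set (c0 := mkC Spoiler (s,t) None None false).
  exists (sigma x y c0). split; [apply sigma_valid|]. split.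
  - intros p Hp0 Hm Hc N. apply NNPP; intros HN.
    assert (HI0 : Inv x y (p 0)) by (rewrite Hp0; simpl; auto).
    assert (Hinv : forall n, Inv x y (p n)).
    { intros n. apply (play_inv x y c0 p n); auto. }
    apply (no_infinite_silence x y c0 p Hm Hc Hinv N).
    intros m Hm'. destruct (rw St A (p m)) eqn:E; auto. exfalso; apply HN; eauto.
  - intros p k Hp0 Hm Hc Hst'.
    assert (HI0 : Inv x y (p 0)) by (rewrite Hp0; simpl; auto).
    pose proof (play_inv x y c0 p k HI0 Hm Hc k (le_n k)) as HI.
    destruct (own St A (p k)) eqn:Ho; auto. exfalso.
    destruct (p k) as [[|] ? ? ? ?] eqn:Hp; simpl in Ho; try discriminate.
    destruct (Resp_exists x y _ HI) as [d Hd]. apply (Hst' d). rewrite <- Hp. rewrite Hp. apply Resp_move; auto.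
Qed.

Section Bwd.
Variable E : Tag -> Prop.
Local Notation mv := (move St A tau step E).
Local Notation own := (own St A).
Local Notation rw := (rw St A).
Local Notation hist := (hist St A).
Local Notation winning_from := (winning_from St A tau step E).
Local Notation valid := (valid_strategy St A tau step E).

Lemma winning_ext (s1 s2 : strategy St A) c : (forall h, s1 h = s2 h) -> winning_from s1 c -> winning_from s2 c.
Proof.
  intros He [H1 H2]. split.
  - intros p Hp0 Hm Hc. apply H1; auto. intros n Ho; rewrite He; auto.
  - intros p k Hp0 Hm Hc. apply H2; auto. intros n Hn Ho; rewrite He; auto.
Qed.

Lemma hist_S (p : nat -> conf) n : hist p (S n) = p 0 :: hist (fun i => p (S i)) n.
Proof. unfold hist. simpl. f_equal. rewrite <- seq_shift, map_map. reflexivity. Qed.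

Lemma shift1 (sg : strategy St A) c c' : winning_from sg c -> mv c c' ->
  (own c = Duplicator -> c' = sg [c]) -> winning_from (fun h => sg (c :: h)) c'.
Proof.
  intros [W1 W2] Hm Hc. split.
  - intros p Hp0 Hmv Hcons N.
    set (q := fun n => match n with 0 => c | S n => p n end).
    destruct (W1 q eq_refl) with (N := S N) as [n [Hn Hr]].
    + intros [|n]; simpl; [rewrite Hp0; auto|apply Hmv].
    + intros [|n] Ho; simpl in *.
      * rewrite Hp0. apply Hc; auto.
      * rewrite (Hcons n Ho). rewrite hist_S. reflexivity.
    + destruct n as [|n]; [lia|]. exists n; split; [lia|auto].
  - intros p k Hp0 Hmv Hcons Hst.
    set (q := fun n => match n with 0 => c | S n => p n end).
    apply (W2 q (S k) eq_refl); auto.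
    + intros [|n] Hn; simpl; [rewrite Hp0; auto|apply Hmv; lia].
    + intros [|n] Hn Ho; simpl in *.
      * rewrite Hp0. apply Hc; auto.
      * rewrite (Hcons n ltac:(lia) Ho). rewrite hist_S. reflexivity.
Qed.

Lemma valid_shift (sg : strategy St A) l : valid sg -> valid (fun h => sg (l ++ h)).
Proof. intros Hv h c Ho Hm. simpl. rewrite app_assoc. apply Hv; auto. Qed.

Lemma shift_prefix (sg : strategy St A) (p : nat -> conf) n :
  winning_from sg (p 0) ->
  (forall m, m < n -> mv (p m) (p (S m))) ->
  (forall m, m < n -> own (p m) = Duplicator -> p (S m) = sg (hist p m)) ->
  winning_from (fun h => sg (map p (seq 0 n) ++ h)) (p n).
Proof.
  intros W Hm Hc. induction n.
  - simpl. auto.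
  - assert (IH : winning_from (fun h => sg (map p (seq 0 n) ++ h)) (p n)) by (apply IHn; intros; auto).
    eapply winning_ext; [|apply (shift1 _ _ _ IH (Hm n ltac:(lia)))].
    + intros h. cbv beta. rewrite seq_S, map_app, <- app_assoc. reflexivity.
    + intros Ho. rewrite (Hc n ltac:(lia) Ho). unfold hist. rewrite seq_S, map_app. reflexivity.
Qed.

Definition Good c := exists sg, valid sg /\ winning_from sg c.

Lemma good_spoiler c c' : Good c -> own c = Spoiler -> mv c c' -> Good c'.
Proof.
  intros [sg [Hv W]] Ho Hm. exists (fun h => sg (c :: h)). split.
  - apply (valid_shift sg [c]); auto.
  - apply shift1; auto. congruence.
Qed.

Lemma trap (P : conf -> Prop) (Concl : Prop) :
  (forall c, P c -> Good c -> own c = Spoiler -> exists c', mv c c' /\ rw c' = false /\ P c') ->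
  (forall c c', P c -> own c = Duplicator -> mv c c' -> Good c' -> Concl \/ (rw c' = false /\ P c')) ->
  forall c, Good c -> P c -> Concl.
Proof.
  intros HS HD c [sg [Hv W]] Pc. apply NNPP; intros HC.
  set (chS := fun d => epsilon (inhabits d) (fun c' => mv d c' /\ rw c' = false /\ P c')).
  set (next := fun h => let d := last h c in
                 match own d with Spoiler => chS d | Duplicator => sg h end).
  set (H := fix H n := match n with 0 => [c] | S n => H n ++ [next (H n)] end).
  set (p := fun n => last (H n) c).
  assert (E1 : forall n, p (S n) = next (H n)).
  { intros n. unfold p. change (H (S n)) with (H n ++ [next (H n)]). apply last_last. }
  assert (HH : forall n, H n = hist p n).
  { induction n. - reflexivity.
    - change (H (S n)) with (H n ++ [next (H n)]). unfold hist in *.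
      rewrite seq_S, map_app. replace (0 + S n) with (S n) by lia. rewrite <- E1. f_equal. exact IHn. }
  assert (Hp : forall n, p (S n) = match own (p n) with Spoiler => chS (p n) | Duplicator => sg (hist p n) end).
  { intros n. rewrite E1. unfold next. cbv zeta. fold (p n). rewrite HH. reflexivity. }
  assert (Hcons : forall n, own (p n) = Duplicator -> p (S n) = sg (hist p n)).
  { intros n Ho. rewrite Hp, Ho. reflexivity. }
  assert (Hp0 : p 0 = c) by reflexivity.
  assert (Hgood : forall n, (forall m, m < n -> mv (p m) (p (S m))) -> Good (p n)).
  { intros n Hm. exists (fun h => sg (map p (seq 0 n) ++ h)). split.
    - apply valid_shift; auto.
    - apply shift_prefix; auto. }
  assert (Hstep : forall n, (forall m, m < n -> mv (p m) (p (S m))) -> P (p n) ->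
            mv (p n) (p (S n)) /\ rw (p (S n)) = false /\ P (p (S n))).
  { intros n Hm HP. destruct (own (p n)) eqn:Ho.
    - rewrite Hp, Ho. destruct (HS (p n) HP (Hgood n Hm) Ho) as [c' Hc'].
      apply (epsilon_spec (inhabits (p n)) (fun c' => mv (p n) c' /\ rw c' = false /\ P c')). eauto.
    - assert (Hex : exists c', mv (p n) c').
      { apply NNPP; intros Hno. destruct W as [_ W2].
        assert (own (p n) = Spoiler).
        { apply (W2 p n Hp0 Hm); auto. intros c' Hc'; apply Hno; eauto. }
        congruence. }
      assert (Hmv : mv (p n) (p (S n))).
      { rewrite (Hcons n Ho). unfold hist. rewrite seq_S, map_app. apply Hv; auto. }
      assert (G : Good (p (S n))).
      { apply Hgood. intros m Hm'. destruct (Nat.eq_dec m n); [subst m; auto|apply Hm; lia]. }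
      destruct (HD _ _ HP Ho Hmv G) as [X|[X Y]]; [contradiction|auto]. }
  assert (All : forall n, (forall m, m < n -> mv (p m) (p (S m))) /\ P (p n)).
  { induction n.
    - split; [intros; lia|rewrite Hp0; auto].
    - destruct IHn as [Hm HP]. destruct (Hstep n Hm HP) as [A1 [A2 A3]]. split; auto.
      intros m Hm'. destruct (Nat.eq_dec m n); [subst m; auto|apply Hm; lia]. }
  destruct W as [W1 _].
  destruct (W1 p Hp0 (fun n => proj1 (Hstep n (proj1 (All n)) (proj2 (All n)))) Hcons 1) as [n [Hn Hr]].
  destruct n as [|n]; [lia|].
  rewrite (proj1 (proj2 (Hstep n (proj1 (All n)) (proj2 (All n))))) in Hr. discriminate.
Qed.

End Bwd.

Lemma dmove_inv (E0 : Tag -> Prop) U V a u' vb f r c' : move St A tau step E0 (mkC Duplicator (U,V) (Some (a,u')) (Some (vb,f)) r) c' ->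
  (a = tau /\ c' = mkC Spoiler (u',vb) None None false)
  \/ (f = Frown /\ exists v', step vb a v' /\ (c' = mkC Spoiler (u',v') (Some (a,u')) (Some (v',Smile)) false \/
        c' = mkC Spoiler (u',v') None None true \/
        (E0 Smile /\ c' = mkC Spoiler (U,V) (Some (a,u')) (Some (v',Smile)) false)))
  \/ (exists v', step vb tau v' /\ (c' = mkC Spoiler (U,v') (Some (a,u')) (Some (v',f)) false \/
        (f = Smile /\ c' = mkC Spoiler (u',v') None None true) \/
        (E0 f /\ c' = mkC Spoiler (U,V) (Some (a,u')) (Some (v',f)) false))).
Proof.
  intros H. inversion H; subst.
  - left; auto.
  - right; left; split; auto. exists v'; auto.
  - right; left; split; auto. exists v'; auto.
  - right; left; split; auto. exists v'; auto.
  - right; right. exists v'; auto.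
  - right; right. exists v'; auto.
  - right; right. exists v'; auto.
Qed.

Section Bwd2.
Variables (x y : Mode).
Local Notation E := (Exy x y).
Local Notation mv := (move St A tau step E).
Local Notation own := (own St A).
Local Notation rw := (rw St A).
Local Notation Good := (Good E).

Definition Shape s t (c : conf) : Prop :=
  own c = Spoiler /\ pos St A c = (s,t) /\
  (cc St A c = None \/
   (exists a s1, cc St A c = Some (a,s1) /\ step s a s1 /\ mm St A c = Some (t,Frown)) \/
   (exists a, cc St A c = Some (a,s) /\ mm St A c = Some (t,Smile))).

Definition W s t := exists c, Good c /\ Shape s t c.
Definition Rg s t := W s t \/ W t s.

Lemma W_clean s t m r : Good (mkC Spoiler (s,t) None m r) -> Rg s t.
Proof. intros G. left. eexists; split; [exact G|]. repeat split; simpl; auto. Qed.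

Lemma W_frown s t a s1 r : Good (mkC Spoiler (s,t) (Some (a,s1)) (Some (t,Frown)) r) -> step s a s1 -> Rg s t.
Proof. intros G H. left. eexists; split; [exact G|]. repeat split; simpl; auto. right; left; eauto. Qed.

Lemma W_smile s t a r : Good (mkC Spoiler (s,t) (Some (a,s)) (Some (t,Smile)) r) -> Rg s t.
Proof. intros G. left. eexists; split; [exact G|]. repeat split; simpl; auto. right; right; eauto. Qed.

Definition Concl s t a s' := (a = tau /\ Rg s' t) \/
  exists t1 t2 t', gtaus x Rg s t t1 /\ step t1 a t2 /\ gtaus y Rg s' t2 t' /\ Rg s' t'.

Lemma mk_gx u v t1 : Rg u v -> taus v t1 -> (x = b -> Rg u t1) -> gtaus x Rg u v t1.
Proof. destruct x; simpl; auto. Qed.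

Lemma mk_gy u t2 t' : taus t2 t' -> (y = b -> Rg u t2) -> Rg u t' -> gtaus y Rg u t2 t'.
Proof. destruct y; simpl; auto. Qed.

Definition AnsP u v a u' (c : conf) : Prop :=
  cc St A c = Some (a,u') /\
  ((exists vb, mm St A c = Some (vb,Frown) /\ fst (pos St A c) = u /\ taus v vb /\ (x = b -> Rg u vb) /\
       (vb = v \/ exists vl, taus v vl /\ step vl tau vb /\ (x = b -> Rg u vl))) \/
   (exists vb t1 t2, mm St A c = Some (vb,Smile) /\ taus v t1 /\ (x = b -> Rg u t1) /\ step t1 a t2 /\
       taus t2 vb /\ (y = b -> Rg u' t2))).

Lemma S1_stay (P : conf -> Prop) c : own c = Spoiler -> cc St A c <> None ->
  (P (mkC Duplicator (pos St A c) (cc St A c) (mm St A c) false)) ->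
  exists c', mv c c' /\ rw c' = false /\ P c'.
Proof.
  intros Ho Hc HP. destruct c as [o p0 c0 m0 r0]; simpl in *. subst o.
  eexists; split; [apply mvS1; auto|]. split; auto.
Qed.

Lemma answer u v a u' r : Good (mkC Duplicator (u,v) (Some (a,u')) (Some (v,Frown)) r) ->
  step u a u' -> Rg u v -> Concl u v a u'.
Proof.
  intros G Hs HR.
  refine (trap E (AnsP u v a u') (Concl u v a u') _ _ _ G _).
  - intros c [Hc HH] _ Ho. apply S1_stay; auto. congruence.
    split; auto.
  - intros c c' HP Ho Hm G'. destruct HP as [Hc Hph].
    destruct c as [o [U V] cc0 mm0 r0]; simpl in Ho, Hc, Hph; subst o cc0.
    destruct Hph as [[wb [Hm0 [Hf [Hv [Hx Hl]]]]]|[wb [t1 [t2 [Hm0 [Hv [Hx [Ht [Ht2 Hy]]]]]]]]];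
      subst mm0.
    + simpl in Hf. subst U. apply dmove_inv in Hm.
      destruct Hm as [[Ha ->]|[[_ [v' [Hs' [->|[->|[HE ->]]]]]]|[v' [Hs' [->|[[Hfs _]|[HE ->]]]]]]].
      * subst a. left. destruct Hl as [->|[vl [L1 [L2 L3]]]].
        -- left. split; auto. eapply W_clean; eauto.
        -- right. exists vl, wb, wb. repeat split.
           ++ apply mk_gx; auto.
           ++ auto.
           ++ apply mk_gy; [constructor| |]; intros; eapply W_clean; eauto.
           ++ eapply W_clean; eauto.
      *
        right. split; auto. split; auto. right. exists v', wb, v'. repeat split; auto. constructor.
        intros _. eapply W_smile; eauto.
      *
        left. right. exists wb, v', v'. repeat split; auto.
        -- apply mk_gx; auto.
        -- apply mk_gy; [constructor| |]; intros; eapply W_clean; eauto.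
        -- eapply W_clean; eauto.
      *
        right. split; auto. split; auto. right. exists v', wb, v'. repeat split; auto. constructor.
        intros Hyb. simpl in HE. rewrite Hyb in HE. discriminate.
      *
        right. split; auto. split; auto. left. exists v'. repeat split; auto.
        -- eapply taus_trans; eauto. apply taus_one; auto.
        -- intros _. eapply W_frown; eauto.
        -- right. exists wb. repeat split; auto.
      * discriminate.
      *
        right. split; auto. split; auto. left. exists v'. repeat split; auto.
        -- eapply taus_trans; eauto. apply taus_one; auto.
        -- intros Hxb. simpl in HE. rewrite Hxb in HE. discriminate.
        -- right. exists wb. repeat split; auto.
    + apply dmove_inv in Hm.
      destruct Hm as [[Ha ->]|[[Hff _]|[v' [Hs' [->|[[_ ->]|[HE ->]]]]]]]; try discriminate.
      * left. right. exists t1, t2, wb. repeat split; auto.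
        -- apply mk_gx; auto.
        -- apply mk_gy; auto. eapply W_clean; eauto.
        -- eapply W_clean; eauto.
      * right. split; auto. split; auto. right. exists v', t1, t2. repeat split; auto.
        eapply taus_trans; eauto. apply taus_one; auto.
      * left. right. exists t1, t2, v'. repeat split; auto.
        -- apply mk_gx; auto.
        -- apply mk_gy; auto. eapply taus_trans; eauto. apply taus_one; auto. eapply W_clean; eauto.
        -- eapply W_clean; eauto.
      * right. split; auto. split; auto. right. exists v', t1, t2. repeat split; auto.
        eapply taus_trans; eauto. apply taus_one; auto.
  - split; auto. left. exists v. repeat split; auto. constructor.
Qed.


Lemma selfloop s t a r : Good (mkC Spoiler (s,t) (Some (a,s)) (Some (t,Smile)) r) ->
  exists v m r', taus t v /\ Good (mkC Spoiler (s,v) None m r').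
Proof.
  intros G.
  refine (trap E (fun c => cc St A c = Some (a,s) /\ exists vb, mm St A c = Some (vb,Smile) /\ taus t vb) _ _ _ _ G _).
  - intros c [Hc HH] _ Ho. apply S1_stay; [exact Ho|congruence|simpl; auto].
  - intros c c' [Hc [vb [Hm0 Hv]]] Ho Hm G'.
    destruct c as [o [U V] cc0 mm0 r0]; simpl in Ho, Hc, Hm0; subst o cc0 mm0.
    apply dmove_inv in Hm.
    destruct Hm as [[Ha ->]|[[Hff _]|[v' [Hs' [->|[[_ ->]|[HE ->]]]]]]]; try discriminate.
    + left. exists vb, None, false; auto.
    + right. split; auto. split; auto. exists v'; split; auto. eapply taus_trans; eauto. apply taus_one; auto.
    + left. exists v', None, true. split; auto. eapply taus_trans; eauto. apply taus_one; auto.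
    + right. split; auto. split; auto. exists v'; split; auto. eapply taus_trans; eauto. apply taus_one; auto.
  - simpl. split; auto. exists t; split; auto. constructor.
Qed.

Lemma clean_ans s t a s' m r : Good (mkC Spoiler (s,t) None m r) -> step s a s' -> Concl s t a s'.
Proof.
  intros G Hs. apply answer with false; auto.
  - eapply good_spoiler; eauto. apply mvS2a; auto.
  - eapply W_clean; eauto.
Qed.

Lemma concl_pre s t v a : Rg s t -> taus t v -> Concl s v a s -> Concl s t a s.
Proof.
  intros HR Ht [[Ha _]|[t1 [t2 [t' [H1 [H2 [H3 H4]]]]]]].
  - left; auto.
  - right. exists t1, t2, t'. repeat split; auto.
    apply mk_gx; auto.
    + eapply taus_trans; eauto. destruct x; simpl in H1; tauto.
    + intros Hb. rewrite Hb in H1. simpl in H1. tauto.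
Qed.

Lemma transfer_W s t a s' : W s t -> step s a s' -> Concl s t a s'.
Proof.
  intros HW Hs. pose proof HW as [c [G [Ho [Hp Hsh]]]].
  destruct c as [o pp cc0 mm0 r0]; simpl in *; subst o pp.
  destruct Hsh as [->|[[a1 [s1 [-> [_ ->]]]]|[a1 [-> ->]]]].
  - eapply clean_ans; eauto.
  - apply answer with (if (excluded_middle_informative ((a,s') = (a1,s1))) then false else true); auto.
    + destruct (excluded_middle_informative ((a,s') = (a1,s1))) as [E1|E1].
      * injection E1; intros; subst. eapply good_spoiler; eauto. apply mvS1; congruence.
      * eapply good_spoiler; eauto. apply mvS2b; auto. congruence.
    + left; auto.
  - destruct (classic ((a,s') = (a1,s))) as [E1|E1].
    + injection E1; intros; subst.
      destruct (selfloop _ _ _ _ G) as [v [m [r' [Hv G2]]]].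
      apply concl_pre with v; auto. left; auto. eapply clean_ans; eauto.
    + apply answer with true; auto.
      * eapply good_spoiler; eauto. apply mvS2b; auto. congruence.
      * left; auto.
Qed.

Lemma transfer_W' s t a s' : W t s -> step s a s' -> Concl s t a s'.
Proof.
  intros HW Hs. pose proof HW as [c [G [Ho [Hp Hsh]]]].
  destruct c as [o pp cc0 mm0 r0]; simpl in *; subst o pp.
  apply answer with true; auto.
  - eapply good_spoiler; eauto. apply mvS3; auto.
  - right; auto.
Qed.

Lemma div_D (f : nat -> St) t r : Good (mkC Duplicator (f 0, t) (Some (tau, f 1)) (Some (t,Frown)) r) ->
  (forall n, step (f n) tau (f (S n))) -> exists t' k, tplus t t' /\ Rg (f k) t'.
Proof.
  intros G Hf.
  refine (trap E (fun c => exists j vb, taus t vb /\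
            ((own c = Spoiler /\ cc St A c = None /\ pos St A c = (f j, vb)) \/
             (cc St A c = Some (tau, f (S j)) /\
               (mm St A c = Some (vb,Frown) \/ (mm St A c = Some (vb,Smile) /\ tplus t vb))))) _ _ _ _ G _).
  - intros c [j [vb [Hv [[_ [Hc Hp]]|[Hc Hm]]]]] _ Ho.
    + destruct c as [o pp cc0 mm0 r0]; simpl in *; subst o pp cc0.
      eexists; split; [apply mvS2a; apply Hf|]. split; [reflexivity|]. exists j, vb. split; [exact Hv|]. right. simpl. auto.
    + apply S1_stay; [exact Ho|congruence|]. exists j, vb. split; auto.
  - intros c c' [j [vb [Hv [[Ho' _]|[Hc Hm0]]]]] Ho Hm G'; [congruence|].
    destruct c as [o [U V] cc0 mm0 r0]; simpl in Ho, Hc, Hm0; subst o cc0.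
    assert (Hfl : exists fl, mm0 = Some (vb, fl) /\ (fl = Smile -> tplus t vb)).
    { destruct Hm0 as [->|[-> H]]; eauto. exists Frown; split; auto; discriminate. }
    clear Hm0. destruct Hfl as [fl [-> Hfl]].
    apply dmove_inv in Hm.
    destruct Hm as [[_ ->]|[[Hff [v' [Hs' [->|[->|[HE ->]]]]]]|[v' [Hs' [->|[[Hfs ->]|[HE ->]]]]]]].
    + right. split; [reflexivity|]. exists (S j), vb. split; [exact Hv|left; simpl; auto].
    + right. split; [reflexivity|]. exists j, v'. split. eapply taus_trans; eauto. apply taus_one; auto.
      right. simpl. split; auto. right. split; auto. eapply taus_tplus; eauto. constructor; auto.
    + left. exists v', (S j). split. eapply taus_tplus; eauto. constructor; auto. eapply W_clean; eauto.
    + right. split; [reflexivity|]. exists j, v'. split. eapply taus_trans; eauto. apply taus_one; auto.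
      right. simpl. split; auto. right. split; auto. eapply taus_tplus; eauto. constructor; auto.
    + right. split; [reflexivity|]. exists j, v'. split. eapply taus_trans; eauto. apply taus_one; auto.
      right. simpl. split; auto. destruct fl; [left; auto|right; split; auto].
      eapply taus_tplus; eauto. constructor; auto.
    + left. exists v', (S j). split. eapply taus_tplus; eauto. constructor; auto. eapply W_clean; eauto.
    + right. split; [reflexivity|]. exists j, v'. split. eapply taus_trans; eauto. apply taus_one; auto.
      right. simpl. split; auto. destruct fl; [left; auto|right; split; auto].
      eapply taus_tplus; eauto. constructor; auto.
  - exists 0, t. split; [constructor|]. right. simpl. auto.
Qed.

Lemma div_clean (f : nat -> St) t m r : Good (mkC Spoiler (f 0, t) None m r) ->
  (forall n, step (f n) tau (f (S n))) -> exists t' k, tplus t t' /\ Rg (f k) t'.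
Proof.
  intros G Hf. apply div_D with false; auto. eapply good_spoiler; eauto. apply mvS2a; auto.
Qed.

Lemma div_W (f : nat -> St) t : W (f 0) t -> (forall n, step (f n) tau (f (S n))) ->
  exists t' k, tplus t t' /\ Rg (f k) t'.
Proof.
  intros HW Hf. pose proof HW as [c [G [Ho [Hp Hsh]]]].
  destruct c as [o pp cc0 mm0 r0]; simpl in *; subst o pp.
  destruct Hsh as [->|[[a1 [s1 [-> [_ ->]]]]|[a1 [-> ->]]]].
  - eapply div_clean; eauto.
  - destruct (classic ((tau, f 1) = (a1,s1))) as [E1|E1].
    + injection E1; intros; subst. apply div_D with false; auto.
      eapply good_spoiler; eauto. apply mvS1; congruence.
    + apply div_D with true; auto. eapply good_spoiler; eauto. apply mvS2b; auto. congruence.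
  - destruct (classic ((tau, f 1) = (a1, f 0))) as [E1|E1].
    + injection E1; intros; subst.
      destruct (selfloop _ _ _ _ G) as [v [m [r' [Hv G2]]]].
      destruct (taus_cases _ _ Hv) as [<-|Hp].
      * eapply div_clean; eauto.
      * exists v, 0. split; auto. eapply W_clean; eauto.
    + apply div_D with true; auto. eapply good_spoiler; eauto. apply mvS2b; auto. congruence.
Qed.

Lemma div_W' (f : nat -> St) t : W t (f 0) -> (forall n, step (f n) tau (f (S n))) ->
  exists t' k, tplus t t' /\ Rg (f k) t'.
Proof.
  intros HW Hf. pose proof HW as [c [G [Ho [Hp Hsh]]]].
  destruct c as [o pp cc0 mm0 r0]; simpl in *; subst o pp.
  apply div_D with true; auto. eapply good_spoiler; eauto. apply mvS3; auto.
Qed.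

Lemma Rg_bisim : generic_bisim_ed St A tau step x y Rg.
Proof.
  split; [split|].
  - intros s t [H|H]; [right|left]; auto.
  - intros s t a s' [H|H] Hs.
    + destruct (transfer_W _ _ _ _ H Hs) as [H1|[t1 [t2 [t' H1]]]]; auto. right; exists t', t1, t2; auto.
    + destruct (transfer_W' _ _ _ _ H Hs) as [H1|[t1 [t2 [t' H1]]]]; auto. right; exists t', t1, t2; auto.
  - intros s t [H|H] f Hf0 Hf; subst s.
    + apply div_W; auto.
    + apply div_W'; auto.
Qed.

End Bwd2.

Lemma backward x y s t : game_equiv_ed St A tau step (Exy x y) s t -> bisimilar_ed St A tau step x y s t.
Proof.
  intros [sg [Hv Hw]]. exists (Rg x y). split; [apply Rg_bisim|].
  apply W_clean with None false. exists sg; auto.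
Qed.

End Main.

Theorem theorem6p10 (St A : Type) (tau : A) (step : St -> A -> St -> Prop)
  (x y : Mode) (s t : St) :
  bisimilar_ed St A tau step x y s t <-> game_equiv_ed St A tau step (Exy x y) s t.
Proof.
  split; [apply forward|apply backward].
Qed.
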